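(* Let $\tau\colon k[y]\otimes k[x]\to k[x]\otimes k[y]$ be the twisting map \[\tau(y^m\otimes x^n)=\sum_{i=0}^n\binom{n}{i}\frac{(m+n-i-1)!}{(m-1)!}\,x^i\otimes y^{m+n-i},\] so that $k[x]\otimes_\tau k[y]$ is the Jordan plane $J=k\langle x,y\mid yx-xy=y^2\rangle$. Then $\tau$ is continuous as a map $k[y]\otimes^!k[x]\to k[x]\otimes^!k[y]$ (for the cofinite topologies on $k[x]$ and $k[y]$) if and only if $k$ has positive characteristic.
   Context: $k$ is a field with the discrete topology; the integer $\frac{(m+n-i-1)!}{(m-1)!}$ is interpreted in $k$ (with $y^0\otimes x^n\mapsto x^n\otimes 1$, i.e. $\tau$ restricts to the swap on $1\otimes k[x]$). For an algebra $R$, the cofinite topology is the linear topology whose open subspaces are those containing a two-sided ideal of finite codimension. For linearly topologized spaces $E,F$, $E\otimes^!F$ is $E\otimes F$ with the linear topology whose open subspaces contain $E_0\otimes F+E\otimes F_0$ for some open subspaces $E_0\subseteq E$, $F_0\subseteq F$. $k[x]\otimes_\tau k[y]$ is $k[x]\otimes k[y]$ with multiplication $(m\otimes m)\circ(\mathrm{id}\otimes\tau\otimes\mathrm{id})$. *)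

(* Defs.v *)
From HB Require Import structures.
From mathcomp Require Import all_boot all_order all_algebra.
Set Implicit Arguments. Unset Strict Implicit. Unset Printing Implicit Defensive.
Import GRing.Theory.
Local Open Scope ring_scope.

(* Representation of tensor products: the vector space k[u] (x) k[v] is
   represented by bivariate polynomials {poly {poly K}}: the coefficient of
   u^m (x) v^n in P is P`_m`_n (outer index = exponent of the FIRST factor).
   The K-scalar action on {poly {poly K}} is  a%:P *: P. *)

Section Defs.
Variable K : fieldType.

Definition tens (e f : {poly K}) : {poly {poly K}} :=
  map_poly (fun a : K => a *: f) e.

Definition subspace (U : {poly K} -> Prop) : Prop :=
  U 0 /\ forall (a : K) u v, U u -> U v -> U (a *: u + v).

Definition tsubspace (W : {poly {poly K}} -> Prop) : Prop :=
  W 0 /\ forall (a : K) u v, W u -> W v -> W (a%:P *: u + v).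

Definition ideal (I : {poly K} -> Prop) : Prop :=
  I 0 /\ (forall u v, I u -> I v -> I (u - v)) /\
  (forall a u, I u -> I (a * u) /\ I (u * a)).

Definition fin_codim (I : {poly K} -> Prop) : Prop :=
  exists s : seq {poly K}, forall f : {poly K},
    exists c : nat -> K, I (f - \sum_(i < size s) c i *: s`_i).

Definition cof_open (U : {poly K} -> Prop) : Prop :=
  subspace U /\
  exists I, ideal I /\ fin_codim I /\ forall u, I u -> U u.

(* E0 (x) F + E (x) F0, as the set of finite sums of elementary tensors
   e (x) f with e in E0 or f in F0 *)
Definition tgen (E0 F0 : {poly K} -> Prop) (P : {poly {poly K}}) : Prop :=
  exists s : seq ({poly K} * {poly K}),
    (forall p, p \in s -> E0 p.1 \/ F0 p.2) /\
    P = \sum_(p <- s) tens p.1 p.2.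

(* open subspaces of k[u] (x)^! k[v], both factors with the cofinite topology *)
Definition tens_open (W : {poly {poly K}} -> Prop) : Prop :=
  tsubspace W /\
  exists E0 F0, cof_open E0 /\ cof_open F0 /\ forall P, tgen E0 F0 P -> W P.

Definition tcontinuous (t : {poly {poly K}} -> {poly {poly K}}) : Prop :=
  forall W, tens_open W -> tens_open (fun P => W (t P)).

(* the coefficient  binom(n,i) (m+n-i-1)!/(m-1)!, with the convention
   y^0 (x) x^n |-> x^n (x) 1 *)
Definition jcoef (m n i : nat) : nat :=
  if m == 0%N then (i == n : nat)
  else ('C(n, i) * ((m + n - i - 1)`! %/ (m - 1)`!))%N.

(* tau : k[y] (x) k[x] -> k[x] (x) k[y];
   input: P`_m`_n = coefficient of y^m (x) x^n;
   output: coefficient of x^i (x) y^j at index i, j *)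
Definition tau (P : {poly {poly K}}) : {poly {poly K}} :=
  \sum_(m < size P) \sum_(n < size P`_m)
     (P`_m`_n)%:P *: \sum_(i < n.+1)
        (jcoef m n i)%:R *: tens 'X^i 'X^(m + n - i).

End Defs.

(* Main.v *)
Require Import Defs.
From mathcomp Require Import all_boot all_order all_algebra.
From mathcomp Require Import zify.
From Stdlib Require Import Classical.
Set Implicit Arguments. Unset Strict Implicit. Unset Printing Implicit Defensive.
Import GRing.Theory.
Local Open Scope ring_scope.

Lemma jcoef_gt m n i : (n < i)%N -> jcoef m n i = 0%N.
Proof.
move=> lt; rewrite /jcoef; case: eqP => _.
  by rewrite (gtn_eqF lt).
by rewrite bin_small.
Qed.

Lemma jcoefS k n i : jcoef k.+1 n i = ('C(n, i) * (k + (n - i)) ^_ (n - i))%N.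
Proof.
rewrite /jcoef /=; case: (leqP i n) => [le|lt]; last by rewrite bin_small.
rewrite ffact_factd ?leq_addl // addnK; congr (_ * (_ %/ _))%N.
rewrite !subn1 /=; first by congr _`!; lia.
by rewrite subn1.
Qed.

Lemma jcoef_n0 m i : jcoef m 0 i = (i == 0%N).
Proof.
case: m => [|k]; first by rewrite /jcoef /= eq_sym.
by rewrite jcoefS; case: i => [|i] //=; rewrite bin0 ffactn0.
Qed.

Lemma jcoef_rec0 m n : jcoef m n.+1 0 = ((m + n) * jcoef m n 0)%N.
Proof.
case: m => [|k]; first by rewrite /jcoef /=; case: n => [|n] //=; rewrite muln0.
by rewrite !jcoefS !bin0 !subn0 !mul1n addnS ffactSS addSn.
Qed.

Lemma jcoef_rec m n i :
  jcoef m n.+1 i.+1 = (jcoef m n i + (m + n - i.+1) * jcoef m n i.+1)%N.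
Proof.
case: m => [|k].
  rewrite /jcoef /= add0n eqSS.
  case: (ltngtP i n) => h; rewrite ?(ltn_eqF h) ?(gtn_eqF h) ?h ?eqxx ?subnn //.
  - by case: eqP => [e|]; [rewrite e subnn | rewrite muln0].
  - by rewrite (gtn_eqF (ltn_trans h (ltnSn _))) muln0.
  - by rewrite (gtn_eqF (ltnSn n)) muln0.
rewrite !jcoefS subSS binS.
case: (ltnP i n) => lt.
  have -> : (n - i = (n - i.+1).+1)%N by lia.
  rewrite addnS ffactSS; have -> : (k.+1 + n - i.+1 = (k + (n - i.+1)).+1)%N by lia.
  by rewrite mulnDl mulnCA mulnA addnC.
by rewrite (bin_small (n:=n) (m:=i.+1)) ?ltnS // !mul0n muln0 !addn0.
Qed.

Lemma jcoef_rise m n : jcoef m n 0 = (\prod_(t < n) (m + t))%N.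
Proof.
elim: n => [|n IH]; first by rewrite big_ord0 jcoef_n0.
by rewrite jcoef_rec0 big_ord_recr /= IH mulnC.
Qed.

Section CharP.
Variables (K : fieldType) (p : nat).
Hypothesis pP : p \in [pchar K].

Lemma natr_dvd a : (p %| a)%N -> a%:R = 0 :> K.
Proof.
move=> /dvdnP[q ->]; by rewrite natrM (pcharf0 pP) mulr0.
Qed.

Lemma natr_addp a : (a + p)%:R = a%:R :> K.
Proof. by rewrite natrD (pcharf0 pP) addr0. Qed.

Lemma jcoef_base m i : (jcoef m p i)%:R = (i == p)%:R :> K.
Proof.
have pr := pcharf_prime pP; have p0 := prime_gt0 pr.
case: m => [|k]; first by rewrite /jcoef /=.
rewrite jcoefS.
case: (ltngtP i p) => [lt|gt|->]; last by rewrite subnn binn ffactn0 ?eqxx.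
  rewrite natr_dvd //.
  case: i lt => [|i] lt.
    rewrite subn0 -bin_ffact; apply: dvdn_mull; apply: dvdn_mull.
    by apply: dvdn_fact; rewrite p0 leqnn.
  by apply: dvdn_mulr; apply: prime_dvd_bin.
by rewrite bin_small.
Qed.

Lemma jcoefX m n i : (jcoef m (n + p) i)%:R =
   (if (p <= i)%N then (jcoef m n (i - p))%:R else 0) :> K.
Proof.
have pr := pcharf_prime pP; have p0 := prime_gt0 pr.
elim: n i => [|n IH] i.
  rewrite add0n jcoef_base; case: leqP => h.
    by rewrite jcoef_n0; congr (nat_of_bool _)%:R; apply/eqP/eqP; lia.
  by rewrite (ltn_eqF h).
rewrite addSn; case: i => [|i].
  rewrite jcoef_rec0 natrM IH; case: leqP => //; first by lia.
  by rewrite mulr0.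
rewrite jcoef_rec natrD natrM !IH.
case: (ltngtP p i.+1) => h.
- rewrite ltnS in h; rewrite h.
  have -> : (i.+1 - p = (i - p).+1)%N by lia.
  rewrite jcoef_rec natrD natrM; congr (_ + _).
  case: (leqP (i - p).+1 n) => h2.
    by have -> : (m + (n + p) - i.+1 = m + n - (i - p).+1)%N by lia.
  by rewrite jcoef_gt // !mulr0.
- by rewrite leqNgt (ltn_trans (ltnSn i) h) /= mulr0 addr0.
- rewrite h leqNgt ltnSn /= subnn add0r jcoef_rec0 natrM; congr (_ * _).
  by congr (_%:R); lia.
Qed.

Lemma jcoefY m n i : (jcoef (m + p) n i)%:R = (jcoef m n i)%:R :> K.
Proof.
elim: n i => [|n IH] i; first by rewrite !jcoef_n0.
case: i => [|i].
  by rewrite !jcoef_rec0 !natrM IH -addnA (addnC p) addnA natr_addp.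
rewrite !jcoef_rec !natrD !natrM !IH; congr (_ + _).
case: (leqP i.+1 n) => h.
  have -> : (m + p + n - i.+1 = (m + n - i.+1) + p)%N by lia.
  by rewrite natr_addp.
by rewrite jcoef_gt // !mulr0.
Qed.

End CharP.

Section Sums.
Variable R : nmodType.

Lemma sum_widen (F : nat -> R) N M : (N <= M)%N -> (forall k, (N <= k)%N -> F k = 0) ->
  \sum_(k < M) F k = \sum_(k < N) F k.
Proof.
move=> le Z; elim: M le => [|M IH] le.
  by move: le; rewrite leqn0 => /eqP ->.
case: (leqP N M) => h.
  by rewrite big_ord_recr /= IH // Z // addr0.
by have -> : N = M.+1 by apply/eqP; rewrite eqn_leq le h.
Qed.

Lemma sum_same (F : nat -> R) N M : (forall k, (N <= k)%N -> F k = 0) ->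
  (forall k, (M <= k)%N -> F k = 0) -> \sum_(k < M) F k = \sum_(k < N) F k.
Proof.
move=> ZN ZM; case: (leqP N M) => h; first exact: sum_widen.
by rewrite (sum_widen (ltnW h)).
Qed.

Lemma sum_ind (F : nat -> R) N (a : nat) :
  \sum_(k < N) (if a == k then F k else 0) = if (a < N)%N then F a else 0.
Proof.
elim: N => [|N IH]; first by rewrite big_ord0.
rewrite big_ord_recr /= IH ltnS.
case: (ltngtP a N) => h.
all: try by rewrite addr0.
by rewrite add0r h.
Qed.

End Sums.

Section PolyPart.
Variable K : fieldType.
Notation PP := {poly {poly K}}.

Lemma coef_tens (e f : {poly K}) i j : (tens e f)`_i`_j = e`_i * f`_j.
Proof. by rewrite /tens coef_map_id0 ?scale0r // coefZ. Qed.

Definition S m n : PP := \sum_(i < n.+1)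
        (jcoef m n i)%:R *: tens 'X^i 'X^(m + n - i)%N.

Lemma coef_natr (c : nat) (q : {poly K}) j : ((c%:R : {poly K}) * q)`_j = c%:R * q`_j.
Proof. by rewrite -polyC_natr coefCM. Qed.

Lemma coef_S m n i j : (S m n)`_i`_j = if (i + j == m + n)%N then (jcoef m n i)%:R else 0 :> K.
Proof.
rewrite /S coef_sum coef_sum.
under eq_bigr => i' _ do rewrite coefZ coef_natr coef_tens !coefXn.
rewrite (eq_bigr (fun i' : 'I_n.+1 => if i == i' then
   (if (j == m + n - i)%N then (jcoef m n i)%:R else 0) else 0 :> K)); last first.
  move=> i' _; case: eqP => [->|_]; last by rewrite mul0r mulr0.
  by case: eqP => _; rewrite ?mulr1 ?mulr0.
rewrite (sum_ind (fun i' => if (j == m + n - i)%N then (jcoef m n i)%:R else 0 :> K)).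
case: (leqP i n) => h.
  by rewrite ltnS h; congr (if _ then _ else _); apply/eqP/eqP; lia.
by rewrite ltnS leqNgt h /= jcoef_gt // if_same.
Qed.

Lemma tau_coef (P : PP) i j : (tau P)`_i`_j =
  \sum_(m < (i + j)%N.+1) P`_m`_(i + j - m)%N * (jcoef m (i + j - m)%N i)%:R.
Proof.
rewrite /tau coef_sum coef_sum.
under eq_bigr => m _ do rewrite coef_sum coef_sum.
under eq_bigr => m _ do under eq_bigr => n _ do rewrite coefZ coefCM coef_S.
pose G m := if (m <= i + j)%N then P`_m`_(i + j - m)%N * (jcoef m (i + j - m)%N i)%:R else 0.
rewrite (eq_bigr (fun m : 'I_(size P) => G m)); last first.
  move=> m _; rewrite /G.
  rewrite (eq_bigr (fun n : 'I_(size P`_m) => if ((i + j - m)%N == n :> nat) then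
     (if (m <= i + j)%N then P`_m`_(i + j - m)%N * (jcoef m (i + j - m)%N i)%:R else 0) else 0)).
    rewrite (sum_ind (fun _ : nat => if (m <= i + j)%N then P`_m`_(i + j - m)%N * (jcoef m (i + j - m)%N i)%:R else 0)); case: ltnP => //= h.
    by rewrite (nth_default 0 h) mul0r if_same.
  move=> n _; case: eqP => [e|ne].
    have h1 : (i + j - m)%N = n by lia.
    have h2 : (m <= i + j)%N by lia.
    by rewrite h1 eqxx h2.
  rewrite mulr0; case: eqP => // e; case: leqP => // h; exfalso; lia.
rewrite (sum_same (F := G) (N := (i + j)%N.+1) (M := size P)).
- by apply: eq_bigr => m _; rewrite /G -ltnS ltn_ord.
- by move=> k h; rewrite /G leqNgt h.
- by move=> k h; rewrite /G (nth_default 0 h) coef0 mul0r if_same.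
Qed.

End PolyPart.

Section Lin.
Variable K : fieldType.
Notation PP := {poly {poly K}}.

Lemma tauD (P Q : PP) : tau (P + Q) = tau P + tau Q.
Proof.
apply/polyP => i; apply/polyP => j; rewrite !coefD !tau_coef -big_split /=.
by apply: eq_bigr => m _; rewrite !coefD mulrDl.
Qed.

Lemma tau0 : tau (0 : PP) = 0.
Proof.
apply/polyP => i; apply/polyP => j; rewrite tau_coef !coef0 big1 // => m _.
by rewrite !coef0 mul0r.
Qed.

Lemma tauZ (a : K) (P : PP) : tau (a%:P *: P) = a%:P *: tau P.
Proof.
apply/polyP => i; apply/polyP => j; rewrite coefZ coefCM !tau_coef mulr_sumr.
by apply: eq_bigr => m _; rewrite coefZ coefCM mulrA.
Qed.

Lemma tau_sum I (r : seq I) (F : I -> PP) : tau (\sum_(x <- r) F x) = \sum_(x <- r) tau (F x).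
Proof. exact: (big_morph _ tauD tau0). Qed.

Lemma coef_tens1 (e f : {poly K}) i : (tens e f)`_i = e`_i *: f.
Proof. by rewrite /tens coef_map_id0 ?scale0r. Qed.

Lemma tensE (e f : {poly K}) : tens e f = e^:P * f%:P.
Proof.
apply/polyP => i; rewrite coef_tens1 coefMC coef_map /= mul_polyC //.
Qed.

Lemma tensZl (a : K) (e f : {poly K}) : tens (a *: e) f = a%:P *: tens e f.
Proof. by rewrite !tensE map_polyZ /= scalerAl. Qed.

Lemma tensZr (a : K) (e f : {poly K}) : tens e (a *: f) = a%:P *: tens e f.
Proof. by rewrite !tensE -mul_polyC polyCM -!mul_polyC mulrCA. Qed.

Lemma tensDl (e1 e2 f : {poly K}) : tens (e1 + e2) f = tens e1 f + tens e2 f.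
Proof. by rewrite !tensE rmorphD mulrDl. Qed.

Lemma tensDr (e f1 f2 : {poly K}) : tens e (f1 + f2) = tens e f1 + tens e f2.
Proof. by rewrite !tensE rmorphD mulrDr. Qed.

Lemma tens0l (f : {poly K}) : tens 0 f = 0.
Proof. by rewrite tensE rmorph0 mul0r. Qed.

Lemma tens0r (e : {poly K}) : tens e 0 = 0.
Proof. by rewrite tensE rmorph0 mulr0. Qed.

Lemma tens_suml I (r : seq I) (F : I -> {poly K}) (f : {poly K}) :
  tens (\sum_(x <- r) F x) f = \sum_(x <- r) tens (F x) f.
Proof. exact: (big_morph (fun e => tens e f) (fun a b => tensDl a b f) (tens0l f)). Qed.

Lemma tens_sumr I (r : seq I) (F : I -> {poly K}) (e : {poly K}) :
  tens e (\sum_(x <- r) F x) = \sum_(x <- r) tens e (F x).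
Proof. exact: (big_morph (fun f => tens e f) (tensDr e) (tens0r e)). Qed.

Lemma PP_expand (Q : PP) : Q = \sum_(i < size Q) tens 'X^i Q`_i.
Proof.
apply/polyP => i; rewrite coef_sum.
under eq_bigr => k _ do rewrite coef_tens1 coefXn.
rewrite (eq_bigr (fun k : 'I_(size Q) => if (i == k :> nat) then Q`_k else 0)).
  rewrite (sum_ind (fun k => Q`_k)); case: ltnP => // h.
  by rewrite nth_default.
by move=> k _; case: (i == k :> nat); rewrite ?scale1r ?scale0r.
Qed.

Lemma sum_shift (R : nmodType) (F : nat -> R) n p :
  \sum_(m < n + p) (if (m < p)%N then 0 else F (m - p)%N) = \sum_(m < n) F m.
Proof.
elim: n => [|n IH].
  by rewrite add0n big1 ?big_ord0 // => m _; rewrite ltn_ord.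
rewrite addSn !big_ord_recr /= IH ltnNge leq_addl /=; congr (_ + _).
by rewrite addnK.
Qed.

End Lin.

Section Shift.
Variables (K : fieldType) (p : nat).
Hypothesis pP : p \in [pchar K].
Notation PP := {poly {poly K}}.

Lemma tauX (e h : {poly K}) : tau (tens e (h * 'X^p)) = 'X^p * tau (tens e h).
Proof.
have p0 := prime_gt0 (pcharf_prime pP).
apply/polyP => i; apply/polyP => j; rewrite coefXnM tau_coef.
under eq_bigr => m _ do rewrite coef_tens coefMXn.
case: (ltnP i p) => hi.
  rewrite coef0 big1 // => m _; case: ltnP => hh; first by rewrite mulr0 mul0r.
  have -> : (i + j - m = (i + j - m - p) + p)%N by lia.
  by rewrite (jcoefX pP) leqNgt hi /= mulr0.
rewrite tau_coef.
rewrite (sum_same (F := fun m : nat => e`_m * (if (i + j - m < p)%N then 0 else h`_(i + j - m - p))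
   * (jcoef m (i + j - m) i)%:R) (N := (i - p + j).+1) (M := (i + j).+1)); first last.
- move=> k hk; rewrite ifT ?mulr0 ?mul0r //; lia.
- move=> k hk; rewrite ifT ?mulr0 ?mul0r //; lia.
apply: eq_bigr => m _; rewrite coef_tens; have hm := ltn_ord m; rewrite ltnS in hm.
have -> : (i + j - m < p)%N = false by apply/negbTE; rewrite -leqNgt; lia.
have -> : (i + j - m - p = i - p + j - m)%N by lia.
have -> : (i + j - m = (i - p + j - m) + p)%N by lia.
by rewrite (jcoefX pP) hi.
Qed.

Lemma tauY (e f : {poly K}) : tau (tens ('X^p * e) f) = ('X^p)%:P * tau (tens e f).
Proof.
have p0 := prime_gt0 (pcharf_prime pP).
apply/polyP => i; apply/polyP => j; rewrite coefCM coefXnM tau_coef.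
under eq_bigr => m _ do rewrite coef_tens coefXnM.
case: (ltnP j p) => hj.
  rewrite big1 // => m _; case: ltnP => h; first by rewrite !mul0r.
  by have hm := ltn_ord m; rewrite jcoef_gt ?mulr0 //; lia.
rewrite tau_coef.
pose F := fun m : nat => e`_m * f`_(i + j - p - m) * (jcoef m (i + j - p - m) i)%:R.
transitivity (\sum_(m < (i + j)%N.+1) (if (m < p)%N then 0 else F (m - p)%N)).
  apply: eq_bigr => m _; case: ltnP => h; first by rewrite !mul0r.
  rewrite /F; have -> : (i + j - p - (m - p) = i + j - m)%N by lia.
  by rewrite -[X in jcoef X _ _](subnK h) (jcoefY pP).
have -> : ((i + j).+1 = (i + j - p).+1 + p)%N by lia.
rewrite sum_shift; have -> : (i + (j - p) = i + j - p)%N by lia.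
by apply: eq_bigr => m _; rewrite /F coef_tens.
Qed.

End Shift.

Section Gen.
Variables (K : fieldType) (p : nat).
Hypothesis pP : p \in [pchar K].
Notation PP := {poly {poly K}}.

Lemma tauXk k (e h : {poly K}) : tau (tens e (h * 'X^(p * k))) = 'X^(p * k) * tau (tens e h).
Proof.
elim: k h => [|k IH] h; first by rewrite muln0 !expr0 mulr1 mul1r.
rewrite mulnS !exprD (mulrC ('X^p : {poly K})) mulrA.
by rewrite (tauX pP) IH mulrA.
Qed.

Lemma tauYk k (e f : {poly K}) : tau (tens ('X^(p * k) * e) f) = ('X^(p * k))%:P * tau (tens e f).
Proof.
elim: k e => [|k IH] e; first by rewrite muln0 !expr0 mul1r mul1r.
by rewrite mulnS !exprD -mulrA (tauY pP) IH polyCM mulrA.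
Qed.

Lemma tauXf (d : nat -> K) N (e h : {poly K}) :
  tau (tens e (h * \sum_(k < N) d k *: 'X^(p * k))) =
  (\sum_(k < N) d k *: 'X^(p * k))^:P * tau (tens e h).
Proof.
rewrite mulr_sumr tens_sumr tau_sum rmorph_sum mulr_suml; apply: eq_bigr => k _.
rewrite -scalerAr tensZr tauZ tauXk /= map_polyZ map_polyXn scalerAl.
by [].
Qed.

Lemma tauYf (d : nat -> K) N (e f : {poly K}) :
  tau (tens ((\sum_(k < N) d k *: 'X^(p * k)) * e) f) =
  (\sum_(k < N) d k *: 'X^(p * k))%:P * tau (tens e f).
Proof.
rewrite mulr_suml tens_suml tau_sum rmorph_sum mulr_suml; apply: eq_bigr => k _.
by rewrite -scalerAl tensZl tauZ tauYk /= -[d k *: _]mul_polyC polyCM -mul_polyC mulrA.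
Qed.

Lemma frobE (f : {poly K}) : f ^+ p = \sum_(k < size f) (f`_k ^+ p) *: 'X^(p * k).
Proof.
have pP' : p \in [pchar {poly K}] by rewrite pchar_poly.
rewrite -{1}(coefK f) poly_def.
transitivity (pFrobenius_aut pP' (\sum_(i < size f) f`_i *: 'X^i)); first by [].
rewrite rmorph_sum; apply: eq_bigr => k _.
by rewrite /= pFrobenius_autE exprZn -exprM mulnC.
Qed.

End Gen.

Section Mem.
Variable K : fieldType.
Notation PP := {poly {poly K}}.

Lemma tgen_sum (E0 F0 : {poly K} -> Prop) n (a b : nat -> {poly K}) :
  (forall i, (i < n)%N -> E0 (a i) \/ F0 (b i)) ->
  tgen E0 F0 (\sum_(i < n) tens (a i) (b i)).
Proof.
move=> H; exists [seq (a i, b i) | i <- iota 0 n]; split.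
  by move=> q /mapP [i]; rewrite mem_iota add0n => /andP[_ hi] -> /=; apply: H.
by rewrite big_map -(subn0 n) -/(index_iota 0 n) big_mkord subn0.
Qed.

Lemma memX (E0 F0 : {poly K} -> Prop) (I : {poly K} -> Prop) f (Q : PP) :
  ideal I -> (forall u, I u -> E0 u) -> I f -> tgen E0 F0 (f^:P * Q).
Proof.
move=> [_ [_ idM]] IE If.
rewrite {1}(PP_expand Q) mulr_sumr.
rewrite (eq_bigr (fun i : 'I_(size Q) => tens (f * 'X^i) Q`_i)).
  apply: (tgen_sum (a := fun i => f * 'X^i) (b := fun i => Q`_i)) => i _.
  by left; apply: IE; case: (idM 'X^i f If).
by move=> i _; rewrite !tensE rmorphM mulrA.
Qed.

Lemma memY (E0 F0 : {poly K} -> Prop) (I : {poly K} -> Prop) g (Q : PP) :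
  ideal I -> (forall u, I u -> F0 u) -> I g -> tgen E0 F0 (g%:P * Q).
Proof.
move=> [_ [_ idM]] IF Ig.
rewrite {1}(PP_expand Q) mulr_sumr.
rewrite (eq_bigr (fun i : 'I_(size Q) => tens 'X^i (g * Q`_i))).
  apply: (tgen_sum (a := fun i => 'X^i) (b := fun i => g * Q`_i)) => i _.
  by right; apply: IF; case: (idM Q`_i g Ig).
by move=> i _; rewrite !tensE polyCM mulrCA.
Qed.

End Mem.

Section Opens.
Variable K : fieldType.
Notation PP := {poly {poly K}}.

Lemma fin_codim_nz (I : {poly K} -> Prop) : fin_codim I -> exists f, I f /\ f != 0.
Proof.
move=> [s Hs]; set N := (\sum_(i < size s) size (nth (0%R : {poly K}) s i))%N.
have [c Hc] := Hs 'X^N; exists ('X^N - \sum_(i < size s) c i *: s`_i); split => //.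
apply/eqP => E0; have := congr1 (fun q : {poly K} => q`_N) E0; rewrite /= coefB coefXn eqxx coef_sum coef0.
rewrite big1 ?subr0; first by move/eqP; rewrite oner_eq0.
move=> i _; rewrite coefZ nth_default ?mulr0 //.
by rewrite /N (bigD1 i) //= leq_addr.
Qed.

Lemma sum_X_coef (r : {poly K}) n : (size r <= n)%N ->
  \sum_(i < n) r`_i *: 'X^i = r.
Proof.
move=> h; rewrite -{2}(coefK r) poly_def.
rewrite (sum_widen (F := fun i => r`_i *: 'X^i) (N := size r)) // => k hk.
by rewrite nth_default // scale0r.
Qed.

Lemma cof_principal (q : {poly K}) : q != 0 -> cof_open (fun e => exists h, e = h * q).
Proof.
move=> q0.
have sub : subspace (fun e => exists h, e = h * q).
  split; first by exists 0; rewrite mul0r.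
  by move=> a u v [h1 ->] [h2 ->]; exists (a *: h1 + h2); rewrite mulrDl scalerAl.
split => //; exists (fun e => exists h, e = h * q); split; last split => //.
  split; first by exists 0; rewrite mul0r.
  split; first by move=> u v [h1 ->] [h2 ->]; exists (h1 - h2); rewrite mulrBl.
  move=> a u [h ->]; split; first by exists (a * h); rewrite mulrA.
  by exists (h * a); rewrite mulrAC.
exists [seq 'X^i | i <- iota 0 (size q)] => f.
exists (fun i => (f %% q)`_i); exists (f %/ q).
rewrite size_map size_iota.
rewrite (eq_bigr (fun i : 'I_(size q) => (f %% q)`_i *: 'X^i)); last first.
  by move=> i _; rewrite (nth_map 0%N) ?size_iota // nth_iota.
rewrite sum_X_coef; last by rewrite ltnW // ltn_modp.
by rewrite {1}(divp_eq f q) addrK.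
Qed.

End Opens.

Section Zero.
Variable K : fieldType.
Notation PP := {poly {poly K}}.

Lemma tau_row0 m (b : {poly K}) j : (tau (tens 'X^m b))`_0`_j =
  if (j < m)%N then 0 else b`_(j - m) * (jcoef m (j - m) 0)%:R.
Proof.
rewrite tau_coef add0n.
rewrite (eq_bigr (fun m' : 'I_j.+1 => if (m == m' :> nat) then
   b`_(j - m) * (jcoef m (j - m) 0)%:R else 0)).
  rewrite (sum_ind (fun _ => b`_(j - m) * (jcoef m (j - m) 0)%:R)) ltnS.
  by case: leqP.
move=> m' _; rewrite coef_tens coefXn eq_sym; case: eqP => [->|_].
  by rewrite mulr1n mul1r.
by rewrite mulr0n !mul0r.
Qed.

Lemma phi_tau m (b : {poly K}) : ((tau (tens 'X^m b))`_0).[1] =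
  \sum_(n < size b) b`_n * (jcoef m n 0)%:R.
Proof.
rewrite horner_coef.
under eq_bigr => j _ do rewrite expr1n mulr1.
rewrite (sum_same (F := fun j => (tau (tens 'X^m b))`_0`_j) (N := (size b + m)%N)).
- under eq_bigr => j _ do rewrite tau_row0.
  by rewrite (sum_shift (fun n => b`_n * (jcoef m n 0)%:R)).
- move=> k hk; rewrite tau_row0; case: ltnP => // h.
  by rewrite nth_default ?mul0r //; apply: (leq_trans _ (leq_sub2r m hk)); rewrite addnK.
- by move=> k hk; rewrite nth_default.
Qed.

Definition rp n : {poly K} := \prod_(t < n) ('X + (t%:R)%:P).

Lemma rp_monic n : rp n \is monic /\ size (rp n) = n.+1.
Proof.
elim: n => [|n [m s]]; first by rewrite /rp big_ord0 monic1 size_poly1.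
rewrite /rp big_ord_recr /= -/(rp n); split.
  by rewrite monicMl // monicXaddC.
by rewrite size_Mmonic ?monic_neq0 // ?monicXaddC // s size_XaddC addn2.
Qed.

Lemma rp_eval n m : (rp n).[m%:R] = (jcoef m n 0)%:R.
Proof.
rewrite /rp horner_prod jcoef_rise natr_prod; apply: eq_bigr => t _.
by rewrite hornerD hornerX hornerC natrD.
Qed.

End Zero.

Section Main.
Variable K : fieldType.
Notation PP := {poly {poly K}}.

Lemma cont_p p : p \in [pchar K] -> tcontinuous (@tau K).
Proof.
move=> pP W [[W0 Wlin] [E0 [F0 [[_ [I [idI [fcI IE]]]] [[_ [J [idJ [fcJ JF]]]] Hsub]]]]].
have p0 : (0 < p)%N := prime_gt0 (pcharf_prime pP).
have [f0 [If0 nz0]] := fin_codim_nz fcI.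
have [g0 [Jg0 nzg]] := fin_codim_nz fcJ.
have powI : forall (L : {poly K} -> Prop) u, ideal L -> L u -> L (u ^+ p).
  move=> L u [_ [_ H]] Lu; rewrite -(prednK p0) exprSr.
  by case: (H (u ^+ p.-1) u Lu).
have Wadd : forall u v, W u -> W v -> W (u + v).
  by move=> u v Hu Hv; have := Wlin 1 u v Hu Hv; rewrite scale1r.
have Wsum : forall (r : seq ({poly K} * {poly K})) (F : _ -> PP),
    (forall x, x \in r -> W (F x)) -> W (\sum_(x <- r) F x).
  move=> r F; elim: r => [|x r IH] H; first by rewrite big_nil.
  rewrite big_cons; apply: Wadd; first by apply: H; rewrite inE eqxx.
  by apply: IH => y yr; apply: H; rewrite inE yr orbT.
split.
  split; first by rewrite tau0.
  by move=> a u v Hu Hv; rewrite tauD tauZ; apply: Wlin.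
exists (fun e => exists h, e = h * g0 ^+ p); exists (fun f => exists h, f = h * f0 ^+ p).
split; first by apply: cof_principal; rewrite expf_neq0.
split; first by apply: cof_principal; rewrite expf_neq0.
move=> P [s [Hs ->]]; rewrite tau_sum; apply: Wsum => x /Hs [[h ->]|[h ->]].
  rewrite mulrC (frobE pP g0) (@tauYf K p pP (fun k => g0`_k ^+ p)); apply: Hsub.
  by apply: (memY E0 _ idJ JF); rewrite -frobE //; apply: powI.
rewrite (frobE pP f0) (@tauXf K p pP (fun k => f0`_k ^+ p)); apply: Hsub.
by apply: (memX F0 (tau (tens x.1 h)) idI IE); rewrite -frobE //; apply: powI.
Qed.

Lemma cont_0 : tcontinuous (@tau K) -> exists p, p \in [pchar K].
Proof.
move=> Hc; apply: NNPP => Hn.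
have natr_neq0 : forall n, (0 < n)%N -> n%:R != 0 :> K.
  by move=> n n0; apply/negP => H; apply: Hn; exact: natf0_pchar n0 H.
have natr_inj : injective (fun n : nat => n%:R : K).
  move=> m n /= E; case: (ltngtP m n) => // h.
    by have := natr_neq0 (n - m)%N; rewrite subn_gt0 h natrB ?(ltnW h) // E subrr eqxx => /(_ isT).
  by have := natr_neq0 (m - n)%N; rewrite subn_gt0 h natrB ?(ltnW h) // E subrr eqxx => /(_ isT).
pose W0 := fun Q : PP => (Q`_0).[1] = 0.
have HW0 : tens_open W0.
  split.
    split; first by rewrite /W0 coef0 horner0.
    by move=> a u v Hu Hv; rewrite /W0 coefD coefZ hornerD hornerCM Hu Hv mulr0 addr0.
  exists (fun e : {poly K} => e`_0 = 0); exists (fun f : {poly K} => f.[1] = 0).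
  split.
    split.
      split; first by rewrite coef0.
      by move=> a u v hu hv; rewrite coefD coefZ hu hv mulr0 addr0.
    exists (fun e : {poly K} => e`_0 = 0); split; last split => //.
      split; first by rewrite coef0.
      split; first by move=> u v hu hv; rewrite coefB hu hv subr0.
      by move=> a u hu; rewrite !coef0M hu mulr0 mul0r.
    exists [:: 1] => f; exists (fun _ => f`_0).
    by rewrite big_ord1 /= coefB coefZ coefC eqxx mulr1 subrr.
  split.
    split.
      split; first by rewrite horner0.
      by move=> a u v hu hv; rewrite hornerD hornerZ hu hv mulr0 addr0.
    exists (fun f : {poly K} => f.[1] = 0); split; last split => //.
      split; first by rewrite horner0.
      split; first by move=> u v hu hv; rewrite hornerD hornerN hu hv subr0.
      by move=> a u hu; rewrite !hornerM hu mulr0 mul0r.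
    exists [:: 1] => f; exists (fun _ => f.[1]).
    by rewrite big_ord1 /= hornerD hornerN hornerZ hornerC mulr1 subrr.
  move=> P [s [Hs ->]]; rewrite /W0 coef_sum horner_sum big1_seq // => x /andP[_ xs].
  by rewrite coef_tens1 hornerZ; case: (Hs x xs) => ->; rewrite ?mul0r ?mulr0.
have [_ [E0' [F0' [_ [[_ [J [_ [fcJ JF]]]] Hsub]]]]] := Hc W0 HW0.
have [b [Jb nzb]] := fin_codim_nz fcJ.
have key : forall m, \sum_(n < size b) b`_n * (jcoef m n 0)%:R = 0.
  move=> m; rewrite -phi_tau; apply: Hsub; exists [:: ('X^m, b)]; split.
    by move=> x; rewrite inE => /eqP -> /=; right; apply: JF.
  by rewrite big_seq1.
pose Q := \sum_(n < size b) b`_n *: rp K n.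
have Qroot : forall m, root Q m%:R.
  move=> m; rewrite /root /Q horner_sum; apply/eqP; rewrite -[RHS](key m); apply: eq_bigr => n _.
  by rewrite hornerZ rp_eval.
have Qnz : Q != 0.
  have sb : (0 < size b)%N by rewrite size_poly_gt0.
  apply/eqP => /(congr1 (fun q : {poly K} => q`_(size b).-1)); rewrite coef0 /Q coef_sum.
  rewrite -(prednK sb) big_ord_recr /= big1.
    rewrite add0r coefZ; have [mo sz] := rp_monic K (size b).-1.
    have := monicP mo; rewrite lead_coefE sz /= => ->; rewrite mulr1 => /eqP.
    by rewrite -lead_coefE lead_coef_eq0 (negbTE nzb).
  move=> n _; rewrite coefZ [(rp K n)`_ _]nth_default ?mulr0 //.
  by have [_ ->] := rp_monic K n; exact: ltn_ord n.
have := max_poly_roots Qnz (rs := [seq m%:R | m <- iota 0 (size Q)]).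
rewrite size_map size_iota ltnn => H; suff : false by [].
apply: H.
  by apply/allP => x /mapP [m _ ->]; apply: Qroot.
by rewrite map_inj_uniq ?iota_uniq.
Qed.

End Main.

Unset Implicit Arguments.

Theorem lemma5p2 (K : fieldType) :
  tcontinuous (@tau K) <-> exists p : nat, p \in [pchar K].
Proof.
split; first exact: cont_0.
by move=> [p pP]; exact: cont_p pP.
Qed.
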